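(* For every theory $\Sigma$ and formula $A \Rightarrow B$: $\Sigma \vdash A \Rightarrow B$ if and only if there is a finite $\Sigma' \subseteq \Sigma^{\mathrm{PL}}$ such that $\Sigma' \vdash_\mathcal{R} A \Rightarrow B$, where $\mathcal{R}$ is the deduction system consisting of (Ax) and (Cut).
   Context: $Y$ is a non-empty finite set of attributes and $\mathcal{T}_Y = \{y^i \mid y \in Y, i \in \mathbb{Z}\}$; $M + j = \{y^{i+j} \mid y^i \in M\}$. A formula is $A \Rightarrow B$ with $A,B$ finite subsets of $\mathcal{T}_Y$; a theory is a set of formulas; $\Sigma^{\mathrm{PL}} = \{A+i \Rightarrow B+i \mid A \Rightarrow B \in \Sigma, i \in \mathbb{Z}\}$. Deduction rules (for arbitrary finite $A,B,C,D \subseteq \mathcal{T}_Y$, $i \in \mathbb{Z}$): (Ax) infer $A \cup B \Rightarrow A$; (Cut) from $A \Rightarrow B$ and $B \cup C \Rightarrow D$ infer $A \cup C \Rightarrow D$; (Shf) from $A \Rightarrow B$ infer $A+i \Rightarrow B+i$. For a set of rules $\mathcal{R}$, an $\mathcal{R}$-proof of $A \Rightarrow B$ by $\Sigma$ is a finite sequence of formulas ending with $A \Rightarrow B$ in which each member is in $\Sigma$ or is the conclusion of a rule in $\mathcal{R}$ whose hypotheses occur earlier; $\Sigma \vdash_\mathcal{R} A \Rightarrow B$ means such a proof exists, and $\Sigma \vdash A \Rightarrow B$ denotes $\vdash_\mathcal{R}$ for $\mathcal{R}$ = \{(Ax), (Cut), (Shf)\}. *)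

(* Defs.v *)
From Stdlib Require List.
From mathcomp Require Import all_boot all_algebra.
From mathcomp Require Import finmap.
Set Implicit Arguments. Unset Strict Implicit. Unset Printing Implicit Defensive.
Import GRing.Theory.
Local Open Scope fset_scope.

(* Attributes Y : a finite (nonempty) type; time-stamped attributes y^i are pairs (y, i). *)
Definition tattr (Y : finType) := (Y * int)%type.

Definition formula (Y : finType) := ({fset tattr Y} * {fset tattr Y})%type.

Definition theory (Y : finType) := formula Y -> Prop.

Definition shiftset (Y : finType) (M : {fset tattr Y}) (j : int) : {fset tattr Y} :=
  [fset (x.1, (x.2 + j)%R) | x in M].

Definition PL (Y : finType) (S : theory Y) : theory Y :=
  fun f => exists A B (i : int), S (A, B) /\ f = (shiftset A i, shiftset B i).

Definition rule_Ax (Y : finType) (prev : seq (formula Y)) (f : formula Y) : Prop :=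
  exists A B : {fset tattr Y}, f = (A `|` B, A).

Definition rule_Cut (Y : finType) (prev : seq (formula Y)) (f : formula Y) : Prop :=
  exists A B C D : {fset tattr Y},
    List.In (A, B) prev /\ List.In (B `|` C, D) prev /\ f = (A `|` C, D).

Definition rule_Shf (Y : finType) (prev : seq (formula Y)) (f : formula Y) : Prop :=
  exists (A B : {fset tattr Y}) (i : int),
    List.In (A, B) prev /\ f = (shiftset A i, shiftset B i).

Definition rule (Y : finType) := seq (formula Y) -> formula Y -> Prop.

Fixpoint is_proof_rev (Y : finType) (R : list (rule Y)) (S : theory Y)
    (p : seq (formula Y)) : Prop :=
  match p with
  | [::] => True
  | f :: prev => is_proof_rev R S prev /\
      (S f \/ exists r, List.In r R /\ r prev f)
  end.

(* R-proof of f by S: a finite nonempty sequence ending with f. *)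
Definition provable (Y : finType) (R : list (rule Y)) (S : theory Y) (f : formula Y) : Prop :=
  exists p : seq (formula Y), is_proof_rev R S (f :: p).

Definition R_full (Y : finType) : list (rule Y) := [:: @rule_Ax Y; @rule_Cut Y; @rule_Shf Y].
Definition R_AxCut (Y : finType) : list (rule Y) := [:: @rule_Ax Y; @rule_Cut Y].

Definition theory_of_seq (Y : finType) (s : seq (formula Y)) : theory Y :=
  fun f => f \in s.

(* Main.v *)
Require Import Defs.
From mathcomp Require Import all_boot all_algebra.
From mathcomp Require Import finmap.
Set Warnings "-notation-overridden,-ambiguous-paths,-notation-incompatible-prefix".
Import GRing.Theory.
Local Open Scope fset_scope.

Section Aux.
Variable Y : finType.
Implicit Types (R : list (rule Y)) (T : theory Y) (p : seq (formula Y)).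

Lemma shiftsetU (A B : {fset tattr Y}) i :
  shiftset (A `|` B) i = shiftset A i `|` shiftset B i.
Proof.
apply/fsetP => x; rewrite in_fsetU.
apply/imfsetP/orP.
- move=> [y]; rewrite /= in_fsetU => /orP[] Hy ->.
  + by left; apply/imfsetP; exists y.
  + by right; apply/imfsetP; exists y.
- case=> /imfsetP [y /= Hy ->]; exists y => //=; by rewrite in_fsetU Hy ?orbT.
Qed.

Lemma shiftset_comp (A : {fset tattr Y}) i j :
  shiftset (shiftset A i) j = shiftset A (i + j)%R.
Proof.
apply/fsetP => x; apply/imfsetP/imfsetP.
- move=> [y /= /imfsetP [z /= Hz ->] ->]; exists z => //=; by rewrite addrA.
- move=> [z /= Hz ->]; exists (z.1, (z.2 + i)%R).
  + by apply/imfsetP; exists z.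
  + by rewrite /= addrA.
Qed.

Lemma shiftset0 (A : {fset tattr Y}) : shiftset A 0 = A.
Proof.
apply/fsetP => x; apply/imfsetP/idP.
- by move=> [y /= Hy ->]; rewrite addr0 -surjective_pairing.
- move=> Hx; exists x => //=; by rewrite addr0 -surjective_pairing.
Qed.

Lemma is_proof_ind R T (P : formula Y -> Prop) p :
  is_proof_rev R T p ->
  (forall f, T f -> P f) ->
  (forall r prev f, List.In r R -> r prev f -> (forall g, List.In g prev -> P g) -> P f) ->
  forall g, List.In g p -> P g.
Proof.
move=> Hp HT HR; elim: p Hp => [|f p IH] //= [Hp Hf] g [<-|Hg]; last by apply: IH.
case: Hf => [/HT //|[r [Hr Hrf]]].
by apply: (HR r p) => //; apply: IH.
Qed.

Definition mono R := forall r, List.In r R -> forall prev l f, r prev f -> r (prev ++ l) f.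

Lemma is_proof_cat R T l1 l2 : mono R ->
  is_proof_rev R T l1 -> is_proof_rev R T l2 -> is_proof_rev R T (l1 ++ l2).
Proof.
move=> Hm; elim: l1 => [|f l1 IH] //= [H1 Hf] H2; split; first by apply: IH.
case: Hf => [|[r [Hr Hrf]]]; [by left | right; exists r; split => //; exact: Hm].
Qed.

Lemma is_proof_weak R T T' p : (forall f, T f -> T' f) ->
  is_proof_rev R T p -> is_proof_rev R T' p.
Proof.
move=> HT; elim: p => [|f p IH] //= [Hp Hf]; split; first exact: IH.
by case: Hf => [/HT|]; [left|right].
Qed.

Lemma mono_full : mono (R_full Y).
Proof.
move=> r /= [<-|[<-|[<-|[]]]] prev l f.
- by [].
- move=> [A [B [C [D [H1 [H2 ->]]]]]]; exists A, B, C, D.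
  by split; [|split]; rewrite // List.in_app_iff; left.
- move=> [A [B [i [H1 ->]]]]; exists A, B, i; split => //.
  by rewrite List.in_app_iff; left.
Qed.

Lemma mono_AxCut : mono (R_AxCut Y).
Proof. move=> r Hr; apply: mono_full; case: Hr => [<-|[<-|[]]]; simpl; tauto. Qed.

End Aux.

Theorem theorem9 (Y : finType) (HY : 0 < #|Y|) (S : theory Y) (A B : {fset tattr Y}) :
  provable (R_full Y) S (A, B) <->
  exists S' : seq (formula Y),
    (forall f, f \in S' -> PL S f) /\
    provable (R_AxCut Y) (theory_of_seq S') (A, B).
Proof.
split.
- move=> [p Hp].
  pose Q := fun f : formula Y => forall i : int, exists S' : seq (formula Y),
    (forall g, g \in S' -> PL S g) /\
    provable (R_AxCut Y) (theory_of_seq S') (shiftset f.1 i, shiftset f.2 i).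
  have HQ : forall g, List.In g ((A, B) :: p) -> Q g.
  { apply: (@is_proof_ind _ _ _ Q _ Hp).
    - move=> [C D] HS i; exists [:: (shiftset C i, shiftset D i)]; split.
      + move=> g; rewrite inE => /eqP ->; by exists C, D, i.
      + exists [::]; split => //; left; by rewrite /theory_of_seq inE.
    - move=> r prev f /= [<-|[<-|[<-|[]]]].
      + move=> [C [D ->]] _ i; exists [::]; split => //.
        exists [::]; split => //; right; exists (@rule_Ax Y); split; first by left.
        by exists (shiftset C i), (shiftset D i); rewrite /= shiftsetU.
      + move=> [C [D [E [F [H1 [H2 ->]]]]]] IH i.
        have [S1 [HS1 [p1 Hp1]]] := IH _ H1 i.
        have [S2 [HS2 [p2 Hp2]]] := IH _ H2 i.
        exists (S1 ++ S2); split.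
        * by move=> g; rewrite mem_cat => /orP[/HS1|/HS2].
        * exists ((shiftset C i, shiftset D i) :: p1 ++ (shiftset (D `|` E) i, shiftset F i) :: p2).
          split.
          -- apply: (@is_proof_cat _ _ _ (_ :: p1) (_ :: p2)); first exact: mono_AxCut.
             ++ apply: is_proof_weak Hp1 => g; rewrite /theory_of_seq mem_cat => ->//.
             ++ apply: is_proof_weak Hp2 => g; rewrite /theory_of_seq mem_cat => ->; by rewrite orbT.
          -- right; exists (@rule_Cut Y); split; first by right; left.
             exists (shiftset C i), (shiftset D i), (shiftset E i), (shiftset F i).
             split; first by left.
             split; last by rewrite /= shiftsetU.
             right; rewrite List.in_app_iff; right; left; by rewrite shiftsetU.
      + move=> [C [D [j [H1 ->]]]] IH i.
        have [S1 [HS1 Hp1]] := IH _ H1 (j + i)%R.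
        exists S1; split => //; by rewrite /= !shiftset_comp. }
  have [S' [HS' Hp']] := HQ _ (or_introl erefl) 0.
  by exists S'; split => //; move: Hp'; rewrite /= !shiftset0.
- move=> [S' [HS' [p Hp]]].
  pose Prov := provable (R_full Y) S.
  suff : forall g, List.In g ((A, B) :: p) -> Prov g by apply; left.
  apply: (@is_proof_ind _ _ _ Prov _ Hp).
  + move=> f /HS' [C [D [i [HS ->]]]].
    exists [:: (C, D)]; split; first by split => //; left.
    right; exists (@rule_Shf Y); split; first by right; right; left.
    by exists C, D, i; split => //; left.
  + move=> r prev f /= [<-|[<-|[]]].
    * move=> Hax _; exists [::]; split => //; right; exists (@rule_Ax Y); split => //; by left.
    * move=> [C [D [E [F [H1 [H2 ->]]]]]] IH.
      have [p1 Hp1] := IH _ H1.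
      have [p2 Hp2] := IH _ H2.
      exists (((C, D) :: p1) ++ ((D `|` E, F) :: p2)); split.
      -- by apply: is_proof_cat => //; exact: mono_full.
      -- right; exists (@rule_Cut Y); split; first by right; left.
         exists C, D, E, F; split; first by left.
         split => //; right; apply: List.in_or_app; right; by left.
Qed.
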